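(* Let $\Gamma$ be either $\Gamma_1$ or $\Gamma_2$ (as in the context), with the Laplacian $-d^2/dx^2$ (no potential). Let $\Gamma^A$ (resp. $\Gamma^B$) be the quantum graph obtained from $\Gamma$ by replacing the vertex condition at $A$ (resp. at $B$) by the Dirichlet condition, all other conditions unchanged. Then $\lambda_1(\Gamma^B)<\lambda_1(\Gamma^A)$.
   Context: $\Gamma_1$: two vertices $A,B$ joined by four edges $e_1,\dots,e_4$ of lengths $\ell_1,\dots,\ell_4>0$, with $\delta$-type conditions at $A$ and $B$ with real coupling constants $\gamma_A<\gamma_B$. $\Gamma_2$: $\Gamma_1$ with an additional vertex $C$ and edge $e_0$ of length $\ell_0>0$ joining $C$ to $A$, with Neumann–Kirchhoff conditions at all of $A,B,C$. A $\delta$-type condition with coupling $\gamma_v$ at $v$: $f$ continuous at $v$ and $\sum_{e\ni v}f_e'(v)=\gamma_v f(v)$ (derivatives into the edges); Neumann–Kirchhoff is $\gamma_v=0$; the Dirichlet condition at $v$ is $f_e(v)=0$ for all edges $e$ at $v$ (it decouples the edges at $v$). $\lambda_1(G)$ denotes the smallest eigenvalue of the quantum graph $G$. *)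

(* Defs.v *)
From Stdlib Require Import Reals List.
From Coquelicot Require Import Coquelicot.
Open Scope R_scope.

(* Vertex conditions: delta-type with coupling constant g (g = 0 is
   Neumann-Kirchhoff), or Dirichlet (f_e(v) = 0 on every edge at v). *)
Inductive vcond := VDelta (g : R) | VDir.

(* [vals] = the values f_e(v) of the edge pieces at v,
   [dsum] = sum of the derivatives at v taken into the edges. *)
Definition vertex_cond (c : vcond) (vals : list R) (dsum : R) : Prop :=
  match c with
  | VDelta g => exists v, List.Forall (fun w => w = v) vals /\ dsum = g * v
  | VDir => List.Forall (fun w => w = 0) vals
  end.

Definition edge_eq (l lam : R) (f df ddf : R -> R) : Prop :=
  (forall x, is_derive f x (df x)) /\ (forall x, is_derive df x (ddf x)) /\
  (forall x, 0 <= x <= l -> - ddf x = lam * f x).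

(* Gamma_1: edges e_1..e_4 (indices 1..4), parametrized by x in [0, l_i],
   x = 0 at A and x = l_i at B.  [eig1 cA cB l1 l2 l3 l4 lam]:
   lam is an eigenvalue of -d^2/dx^2 on Gamma_1 with conditions cA at A and
   cB at B. *)
Definition eig1 (cA cB : vcond) (l1 l2 l3 l4 : R) (lam : R) : Prop :=
  let l := fun i : nat => match i with 1 => l1 | 2 => l2 | 3 => l3 | _ => l4 end in
  exists f df ddf : nat -> R -> R,
    (forall i, (1 <= i <= 4)%nat -> edge_eq (l i) lam (f i) (df i) (ddf i)) /\
    vertex_cond cA (f 1%nat 0 :: f 2%nat 0 :: f 3%nat 0 :: f 4%nat 0 :: nil)
      (df 1%nat 0 + df 2%nat 0 + df 3%nat 0 + df 4%nat 0) /\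
    vertex_cond cB (f 1%nat l1 :: f 2%nat l2 :: f 3%nat l3 :: f 4%nat l4 :: nil)
      (- df 1%nat l1 - df 2%nat l2 - df 3%nat l3 - df 4%nat l4) /\
    (exists i x, (1 <= i <= 4)%nat /\ 0 <= x <= l i /\ f i x <> 0).

(* Gamma_2: Gamma_1 plus edge e_0 (index 0) parametrized by x in [0, l0],
   x = 0 at C and x = l0 at A; Neumann-Kirchhoff at C. *)
Definition eig2 (cA cB : vcond) (l0 l1 l2 l3 l4 : R) (lam : R) : Prop :=
  let l := fun i : nat => match i with 0 => l0 | 1 => l1 | 2 => l2 | 3 => l3 | _ => l4 end in
  exists f df ddf : nat -> R -> R,
    (forall i, (i <= 4)%nat -> edge_eq (l i) lam (f i) (df i) (ddf i)) /\
    vertex_cond cA (f 0%nat l0 :: f 1%nat 0 :: f 2%nat 0 :: f 3%nat 0 :: f 4%nat 0 :: nil)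
      (- df 0%nat l0 + df 1%nat 0 + df 2%nat 0 + df 3%nat 0 + df 4%nat 0) /\
    vertex_cond cB (f 1%nat l1 :: f 2%nat l2 :: f 3%nat l3 :: f 4%nat l4 :: nil)
      (- df 1%nat l1 - df 2%nat l2 - df 3%nat l3 - df 4%nat l4) /\
    vertex_cond (VDelta 0) (f 0%nat 0 :: nil) (df 0%nat 0) /\
    (exists i x, (i <= 4)%nat /\ 0 <= x <= l i /\ f i x <> 0).

Definition is_lambda1 (E : R -> Prop) (lam : R) : Prop :=
  E lam /\ forall mu, E mu -> lam <= mu.

Definition lambda1_lt (EB EA : R -> Prop) : Prop :=
  (exists a, is_lambda1 EA a) /\ (exists b, is_lambda1 EB b) /\
  (forall a b, is_lambda1 EA a -> is_lambda1 EB b -> b < a).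

(* Main.v *)
Require Import Defs.
From Stdlib Require Import Reals Lra Psatz List.
From Coquelicot Require Import Coquelicot.
Open Scope R_scope.


Definition Cf (lam x : R) : R :=
  if Rlt_dec 0 lam then cos (sqrt lam * x)
  else if Rlt_dec lam 0 then (exp (sqrt (-lam) * x) + exp (- (sqrt (-lam) * x))) / 2
  else 1.
Definition Sf (lam x : R) : R :=
  if Rlt_dec 0 lam then sin (sqrt lam * x) / sqrt lam
  else if Rlt_dec lam 0 then (exp (sqrt (-lam) * x) - exp (- (sqrt (-lam) * x))) / (2 * sqrt (-lam))
  else x.

Lemma Sf_der lam x : is_derive (Sf lam) x (Cf lam x).
Proof.
  unfold Sf, Cf. destruct (Rlt_dec 0 lam) as [h|h].
  - assert (k0 := sqrt_lt_R0 _ h). auto_derive; [lra|]. field. lra.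
  - destruct (Rlt_dec lam 0) as [h'|h'].
    + assert (k0 : 0 < sqrt (-lam)) by (apply sqrt_lt_R0; lra).
      auto_derive; [lra|]. field. lra.
    + auto_derive; auto. 
Qed.

Lemma Cf_der lam x : is_derive (Cf lam) x (- lam * Sf lam x).
Proof.
  unfold Sf, Cf. destruct (Rlt_dec 0 lam) as [h|h].
  - assert (k0 := sqrt_lt_R0 _ h). assert (kk := sqrt_sqrt lam (Rlt_le _ _ h)).
    auto_derive; [auto|]. transitivity (- (sqrt lam * sqrt lam) * (sin (sqrt lam * x) / sqrt lam)); [field; lra | rewrite kk; ring].
  - destruct (Rlt_dec lam 0) as [h'|h'].
    + assert (k0 : 0 < sqrt (-lam)) by (apply sqrt_lt_R0; lra).
      assert (kk := sqrt_sqrt (-lam) (ltac:(lra))).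
      auto_derive; [auto|]. match goal with |- _ = - lam * ?X => replace (- lam * X) with ((sqrt (-lam) * sqrt (-lam)) * X) by (rewrite kk; ring) end. field. lra.
    + assert (lam = 0) by lra. subst. auto_derive; auto. ring.
Qed.

Lemma Cf0 lam : Cf lam 0 = 1.
Proof. unfold Cf; destruct (Rlt_dec 0 lam); [rewrite Rmult_0_r, cos_0; auto|].
  destruct (Rlt_dec lam 0); auto. rewrite Rmult_0_r, Ropp_0, exp_0. field. Qed.
Lemma Sf0 lam : Sf lam 0 = 0.
Proof. unfold Sf; destruct (Rlt_dec 0 lam); [rewrite Rmult_0_r, sin_0; field; apply Rgt_not_eq, sqrt_lt_R0; auto|].
  destruct (Rlt_dec lam 0); auto. rewrite Rmult_0_r, Ropp_0, exp_0. field.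
  assert (0 < sqrt (-lam)) by (apply sqrt_lt_R0; lra). lra. Qed.
Lemma Cf_even lam x : Cf lam (-x) = Cf lam x.
Proof. unfold Cf; destruct (Rlt_dec 0 lam). replace (sqrt lam * - x) with (- (sqrt lam * x)) by ring; rewrite cos_neg; auto.
  destruct (Rlt_dec lam 0); auto. replace (sqrt (- lam) * - x) with (- (sqrt (-lam) * x)) by ring.
  rewrite Ropp_involutive, Rplus_comm; reflexivity. Qed.
Lemma Sf_odd lam x : Sf lam (-x) = - Sf lam x.
Proof. unfold Sf; destruct (Rlt_dec 0 lam). replace (sqrt lam * - x) with (- (sqrt lam * x)) by ring.
  rewrite sin_neg. field. apply Rgt_not_eq, sqrt_lt_R0; auto.
  destruct (Rlt_dec lam 0); auto. replace (sqrt (- lam) * - x) with (- (sqrt (-lam) * x)) by ring.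
  rewrite Ropp_involutive. field. assert (0 < sqrt (-lam)) by (apply sqrt_lt_R0; lra). lra. Qed.
Lemma Cf_Sf_id lam x : Cf lam x ^ 2 + lam * Sf lam x ^ 2 = 1.
Proof. unfold Cf, Sf; destruct (Rlt_dec 0 lam) as [h|h].
  assert (k0 := sqrt_lt_R0 _ h). assert (kk := sqrt_sqrt lam (Rlt_le _ _ h)).
  rewrite <- kk at 2. field_simplify; [|lra]. rewrite <- (sin2_cos2 (sqrt lam * x)). unfold Rsqr. field.
  destruct (Rlt_dec lam 0) as [h'|h'].
  assert (k0 : 0 < sqrt (-lam)) by (apply sqrt_lt_R0; lra).
  assert (kk := sqrt_sqrt (-lam) (ltac:(lra))).
  assert (e : exp (sqrt (-lam) * x) * exp (- (sqrt (-lam) * x)) = 1).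
  { rewrite <- exp_plus. replace (_ + _) with 0 by ring. apply exp_0. }
  set (s := sqrt (-lam)) in *. replace lam with (- (s * s)) by lra.
  transitivity (exp (s * x) * exp (- (s * x))); [field; lra | exact e].
  assert (lam = 0) by lra. subst. ring.
Qed.


Lemma D_mult f g x a b : is_derive f x a -> is_derive g x b ->
  is_derive (fun t => f t * g t) x (a * g x + f x * b).
Proof. intros Ha Hb. exact (is_derive_mult f g x a b Ha Hb Rmult_comm). Qed.
Lemma D_minus f g x a b : is_derive f x a -> is_derive g x b ->
  is_derive (fun t => f t - g t) x (a - b).
Proof. intros Ha Hb. exact (is_derive_minus f g x a b Ha Hb). Qed.
Lemma D_plus f g x a b : is_derive f x a -> is_derive g x b ->
  is_derive (fun t => f t + g t) x (a + b).
Proof. intros Ha Hb. exact (is_derive_plus f g x a b Ha Hb). Qed.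
Lemma D_shift (F dF : R -> R) p y : (forall z, is_derive F z (dF z)) ->
  is_derive (fun t => F (t - p)) y (dF (y - p)).
Proof. intros H. replace (dF (y - p)) with (scal (1:R) (dF (y-p))).
  apply (is_derive_comp F (fun t => t - p) y (dF (y-p)) 1). apply H. auto_derive; auto.
  unfold scal; simpl; unfold mult; simpl. ring. Qed.

Lemma der_cont F x d : is_derive F x d -> continuity_pt F x.
Proof. intros H. apply continuity_pt_filterlim. apply (ex_derive_continuous F x). exists d; exact H. Qed.

Lemma const_on (F dF : R -> R) (a b x p : R) : (forall y, is_derive F y (dF y)) ->
  (forall y, a <= y <= b -> dF y = 0) -> a <= x <= b -> a <= p <= b -> F x = F p.
Proof.
  intros HD H0 Hx Hp.
  destruct (MVT_gen F p x dF) as [c [Hc E]].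
  - intros; apply HD.
  - intros; eapply der_cont; apply HD.
  - rewrite H0 in E. lra. revert Hc. unfold Rmin, Rmax; destruct (Rle_dec p x); lra.
Qed.

Lemma Cs_der lam p y : is_derive (fun t => Cf lam (t - p)) y (- lam * Sf lam (y - p)).
Proof. apply (D_shift (Cf lam) (fun z => - lam * Sf lam z)). apply Cf_der. Qed.
Lemma Ss_der lam p y : is_derive (fun t => Sf lam (t - p)) y (Cf lam (y - p)).
Proof. apply (D_shift (Sf lam) (Cf lam)). apply Sf_der. Qed.

Lemma repr l lam f df ddf p x : edge_eq l lam f df ddf -> 0 <= p <= l -> 0 <= x <= l ->
  f x = f p * Cf lam (x - p) + df p * Sf lam (x - p) /\
  df x = - lam * f p * Sf lam (x - p) + df p * Cf lam (x - p).
Proof.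
  intros [Hf [Hdf Heq]] Hp Hx.
  set (P := fun y => f y * Cf lam (y - p) - df y * Sf lam (y - p)).
  set (Q := fun y => lam * f y * Sf lam (y - p) + df y * Cf lam (y - p)).
  assert (EP : P x = P p).
  { apply (const_on P (fun y => (df y * Cf lam (y - p) + f y * (- lam * Sf lam (y - p)))
        - (ddf y * Sf lam (y - p) + df y * Cf lam (y - p))) 0 l); auto.
    - intros y. unfold P. apply (D_minus (fun t => f t * Cf lam (t-p)) (fun t => df t * Sf lam (t-p))).
      apply (D_mult f (fun t => Cf lam (t - p))); auto using Cs_der.
      apply (D_mult df (fun t => Sf lam (t - p))); auto using Ss_der.
    - intros y Hy. specialize (Heq y Hy). cbv beta.
      replace (ddf y) with (- (lam * f y)) by lra. ring. }
  assert (EQ : Q x = Q p).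
  { apply (const_on Q (fun y => ((0 * f y + lam * df y) * Sf lam (y - p) + lam * f y * Cf lam (y - p))
        + (ddf y * Cf lam (y - p) + df y * (- lam * Sf lam (y - p)))) 0 l); auto.
    - intros y. unfold Q. apply (D_plus (fun t => lam * f t * Sf lam (t-p)) (fun t => df t * Cf lam (t-p))).
      apply (D_mult (fun t => lam * f t) (fun t => Sf lam (t - p))); auto using Ss_der.
      apply (D_mult (fun _ => lam) f); auto. auto_derive; auto.
      apply (D_mult df (fun t => Cf lam (t - p))); auto using Cs_der.
    - intros y Hy. specialize (Heq y Hy). cbv beta.
      replace (ddf y) with (- (lam * f y)) by lra. ring. }
  unfold P, Q in EP, EQ. rewrite Rminus_diag, Cf0, Sf0 in EP, EQ.
  assert (W := Cf_Sf_id lam (x - p)).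
  assert (fp : f p = f x * Cf lam (x - p) - df x * Sf lam (x - p)) by lra.
  assert (dfp : df p = lam * f x * Sf lam (x - p) + df x * Cf lam (x - p)) by lra.
  rewrite fp, dfp. split.
  - transitivity (f x * (Cf lam (x - p) ^ 2 + lam * Sf lam (x - p) ^ 2)); [rewrite W; ring| ring].
  - transitivity (df x * (Cf lam (x - p) ^ 2 + lam * Sf lam (x - p) ^ 2)); [rewrite W; ring| ring].
Qed.


Lemma PI_bounds : 3 < PI <= 4.
Proof. split; [|apply PI_4]. assert (H := PI2_3_2). lra. Qed.

Lemma small_sq lam x l : 0 < x <= l -> lam * l ^ 2 < PI ^ 2 -> lam * x ^ 2 < PI ^ 2.
Proof. intros Hx H. assert (PB := PI_bounds).
  destruct (Rle_dec lam 0). nra. assert (x^2 <= l^2) by nra. nra. Qed.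
Lemma small_sq2 lam x l : 0 <= x <= l -> lam * l ^ 2 < (PI/2) ^ 2 -> lam * x ^ 2 < (PI/2) ^ 2.
Proof. intros Hx H. assert (PB := PI_bounds).
  destruct (Rle_dec lam 0). nra. assert (x^2 <= l^2) by nra. nra. Qed.

Lemma Sf_pos lam x : 0 < x -> lam * x ^ 2 < PI ^ 2 -> 0 < Sf lam x.
Proof.
  intros Hx H. assert (PB := PI_bounds). unfold Sf. destruct (Rlt_dec 0 lam) as [h|h].
  - assert (k0 := sqrt_lt_R0 _ h). assert (kk := sqrt_sqrt lam (Rlt_le _ _ h)).
    apply Rdiv_lt_0_compat; auto. apply sin_gt_0. nra.
    assert ((sqrt lam * x) ^ 2 < PI ^ 2) by (replace ((sqrt lam * x)^2) with (lam * x^2); [lra| transitivity (sqrt lam * sqrt lam * x^2); [rewrite kk; reflexivity | ring]]).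
    nra.
  - destruct (Rlt_dec lam 0) as [h'|h']; auto.
    assert (k0 : 0 < sqrt (-lam)) by (apply sqrt_lt_R0; lra).
    apply Rdiv_lt_0_compat; [|lra]. assert (exp (- (sqrt (-lam) * x)) < exp (sqrt (-lam) * x)).
    apply exp_increasing. nra. lra.
Qed.

Lemma Cf_pos lam x : 0 <= x -> lam * x ^ 2 < (PI/2) ^ 2 -> 0 < Cf lam x.
Proof.
  intros Hx H. assert (PB := PI_bounds). unfold Cf. destruct (Rlt_dec 0 lam) as [h|h].
  - assert (k0 := sqrt_lt_R0 _ h). assert (kk := sqrt_sqrt lam (Rlt_le _ _ h)).
    apply cos_gt_0. nra.
    assert ((sqrt lam * x) ^ 2 < (PI/2) ^ 2) by (replace ((sqrt lam * x)^2) with (lam * x^2); [lra| transitivity (sqrt lam * sqrt lam * x^2); [rewrite kk; reflexivity | ring]]).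
    nra.
  - destruct (Rlt_dec lam 0) as [h'|h']; [|lra].
    assert (H1 := exp_pos (sqrt (- lam) * x)). assert (H2 := exp_pos (- (sqrt (- lam) * x))). lra.
Qed.

Lemma D_eq (f : R -> R) (x a b : R) : is_derive f x a -> a = b -> is_derive f x b.
Proof. intros H ->; exact H. Qed.

Lemma strict_decr (F dF : R -> R) l : 0 < l -> (forall y, is_derive F y (dF y)) ->
  (forall y, 0 <= y <= l -> dF y <= 0) -> (forall y, 0 < y <= l -> dF y < 0) -> F l < F 0.
Proof.
  intros Hl HD H1 H2.
  destruct (MVT_gen F 0 (l/2) dF) as [c [Hc E]].
  - intros; apply HD.
  - intros; eapply der_cont; apply HD.
  - destruct (MVT_gen F (l/2) l dF) as [c' [Hc' E']].
    + intros; apply HD.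
    + intros; eapply der_cont; apply HD.
    + revert Hc Hc'. unfold Rmin, Rmax. destruct (Rle_dec 0 (l/2)); [|lra].
      destruct (Rle_dec (l/2) l); [|lra]. intros Hc Hc'.
      assert (dF c <= 0) by (apply H1; lra). assert (dF c' < 0) by (apply H2; lra).
      nra.
Qed.

Lemma WS lam mu l : 0 < l -> lam < mu -> mu * l ^ 2 < PI ^ 2 ->
  Sf lam l * Cf mu l - Cf lam l * Sf mu l < 0.
Proof.
  intros Hl Hlm Hmu.
  assert (Hla : lam * l ^ 2 < PI ^ 2) by nra.
  set (W := fun y => Sf lam y * Cf mu y - Cf lam y * Sf mu y).
  assert (W0 : W 0 = 0) by (unfold W; rewrite !Sf0; ring).
  change (W l < 0). rewrite <- W0.
  apply (strict_decr W (fun y => (lam - mu) * Sf lam y * Sf mu y)); auto.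
  - intros y. unfold W. eapply D_eq.
    apply (D_minus (fun y => Sf lam y * Cf mu y) (fun y => Cf lam y * Sf mu y));
      apply D_mult; auto using Sf_der, Cf_der. ring.
  - intros y Hy. destruct (Req_dec y 0). subst. rewrite !Sf0. lra.
    assert (0 < Sf lam y) by (apply Sf_pos; [lra | apply (small_sq _ _ l); auto; lra]).
    assert (0 < Sf mu y) by (apply Sf_pos; [lra | apply (small_sq _ _ l); auto; lra]).
    assert (0 < Sf lam y * Sf mu y) by nra. nra.
  - intros y Hy. 
    assert (0 < Sf lam y) by (apply Sf_pos; [lra | apply (small_sq _ _ l); auto; lra]).
    assert (0 < Sf mu y) by (apply Sf_pos; [lra | apply (small_sq _ _ l); auto; lra]).
    assert (0 < Sf lam y * Sf mu y) by nra. nra.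
Qed.

Lemma cS_der c lam y : is_derive (fun y => c * Sf lam y) y (c * Cf lam y).
Proof. apply (D_eq _ _ (0 * Sf lam y + c * Cf lam y)). apply (D_mult (fun _ => c)); auto using Sf_der.
  auto_derive; auto. ring. Qed.

Lemma WC lam mu l : 0 < l -> lam < mu -> mu * l ^ 2 < (PI/2) ^ 2 ->
  lam * Sf lam l * Cf mu l < mu * Sf mu l * Cf lam l.
Proof.
  intros Hl Hlm Hmu.
  assert (Hla : lam * l ^ 2 < (PI/2) ^ 2) by nra.
  set (W := fun y => lam * Sf lam y * Cf mu y - mu * Sf mu y * Cf lam y).
  assert (W0 : W 0 = 0) by (unfold W; rewrite !Sf0; ring).
  cut (W l < 0). unfold W; lra. rewrite <- W0.
  assert (Hc : forall y, 0 <= y <= l -> (lam - mu) * Cf lam y * Cf mu y < 0).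
  { intros y Hy.
    assert (0 < Cf lam y) by (apply Cf_pos; [lra | apply (small_sq2 _ _ l); auto]).
    assert (0 < Cf mu y) by (apply Cf_pos; [lra | apply (small_sq2 _ _ l); auto]).
    assert (0 < Cf lam y * Cf mu y) by nra. nra. }
  apply (strict_decr W (fun y => (lam - mu) * Cf lam y * Cf mu y)); auto.
  - intros y. unfold W. eapply D_eq.
    apply (D_minus (fun y => lam * Sf lam y * Cf mu y) (fun y => mu * Sf mu y * Cf lam y)).
    apply (D_mult (fun y => lam * Sf lam y)); auto using Cf_der, cS_der.
    apply (D_mult (fun y => mu * Sf mu y)); auto using Cf_der, cS_der.
    ring.
  - intros y Hy. apply Rlt_le, Hc; auto.
  - intros y Hy. apply Hc; lra.
Qed.

Lemma sinb y : 0 <= y <= 1 -> y - y^3/6 <= sin y <= y.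
Proof. intros H. 
  destruct (pre_sin_bound y 0) as [H1 H2]; try lra. unfold sin_approx, sin_term in H1. simpl in H1.
  split. lra. destruct (Req_dec y 0). subst; rewrite sin_0; lra. apply Rlt_le, sin_lt_x; lra.
Qed.
Lemma cosb y : 0 <= y <= 1 -> 1 - y^2/2 <= cos y <= 1.
Proof. intros H. split; [|apply COS_bound].
  replace y with (2 * (y/2)) by field. rewrite cos_2a_sin. 
  destruct (sinb (y/2)) as [H1 H2]; try lra.
  assert (0 <= sin (y/2)) by (apply sin_ge_0; assert (H' := PI2_3_2); lra). unfold Rsqr. nra.
Qed.
Lemma hypb y : 0 <= y <= 1/2 ->
  0 <= (exp y + exp (-y))/2 - 1 <= 2*y^2 /\ Rabs ((exp y - exp (-y))/2 - y) <= y^2.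
Proof. intros H.
  assert (E : exp y * exp (-y) = 1) by (rewrite <- exp_plus; replace (y + -y) with 0 by ring; apply exp_0).
  assert (A1 := exp_ineq1_le y). assert (A2 := exp_ineq1_le (-y)).
  assert (P1 := exp_pos y). assert (P2 := exp_pos (-y)).
  set (a := exp y) in *. set (b := exp (-y)) in *.
  assert (U1 : a * (1 - y) <= 1) by nra.
  assert (U2 : b * (1 + y) <= 1) by nra.
  assert (V1 : a <= 1 + 2*y) by nra.
  assert (W1 : a - 1 - y <= 2*y^2) by nra.
  assert (W2 : b - 1 + y <= y^2) by nra.
  split. split; lra. apply Rabs_le. split; lra.
Qed.

Lemma Cf_at0 x : Cf 0 x = 1.
Proof. unfold Cf. destruct (Rlt_dec 0 0); [lra|]. destruct (Rlt_dec 0 0); [lra|]. auto. Qed.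
Lemma Sf_at0 x : Sf 0 x = x.
Proof. unfold Sf. destruct (Rlt_dec 0 0); [lra|]. destruct (Rlt_dec 0 0); [lra|]. auto. Qed.

Lemma Cf_cont0 x : 0 < x -> continuity_pt (fun lam => Cf lam x) 0.
Proof.
  intros Hx. unfold continuity_pt, continue_in, limit1_in, limit_in. intros eps Heps. simpl. unfold R_dist.
  assert (X2 : 0 < x^2) by nra.
  exists (Rmin (1/(4*x^2)) (eps/(4*x^2))). split.
  { apply Rmin_pos; apply Rdiv_lt_0_compat; lra. }
  intros lam [_ Hl]. rewrite Rminus_0_r in Hl. rewrite Cf_at0.
  assert (B1 : Rabs lam < 1/(4*x^2)) by (eapply Rlt_le_trans; [exact Hl| apply Rmin_l]).
  assert (B2 : Rabs lam < eps/(4*x^2)) by (eapply Rlt_le_trans; [exact Hl| apply Rmin_r]).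
  assert (C1 : Rabs lam * x^2 < 1/4).
  { apply Rmult_lt_compat_r with (r := x^2) in B1; auto. replace (1/(4*x^2)*x^2) with (1/4) in B1 by (field; lra). lra. }
  assert (C2 : Rabs lam * x^2 < eps/4).
  { apply Rmult_lt_compat_r with (r := x^2) in B2; auto. replace (eps/(4*x^2)*x^2) with (eps/4) in B2 by (field; lra). lra. }
  unfold Cf. destruct (Rlt_dec 0 lam) as [h|h].
  - assert (k0 := sqrt_lt_R0 _ h). assert (kk := sqrt_sqrt lam (Rlt_le _ _ h)).
    rewrite Rabs_right in C1, C2 by lra.
    set (k := sqrt lam) in *. assert (Y : (k*x)^2 = lam * x^2) by (rewrite <- kk; ring).
    destruct (cosb (k * x)) as [H1 H2]. split. nra. nra.
    rewrite Rabs_left1 by lra. nra.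
  - destruct (Rlt_dec lam 0) as [h'|h'].
    + assert (k0 : 0 < sqrt (-lam)) by (apply sqrt_lt_R0; lra).
      assert (kk := sqrt_sqrt (-lam) (ltac:(lra))).
      rewrite Rabs_left in C1, C2 by lra.
      set (k := sqrt (-lam)) in *. assert (Y : (k*x)^2 = - lam * x^2) by (rewrite <- kk; ring).
      destruct (hypb (k * x)) as [[H1 H2] _]. split. nra. nra.
      rewrite Rabs_right by lra. nra.
    + rewrite Rminus_diag, Rabs_R0. auto.
Qed.

Lemma Sf_cont0 x : 0 < x -> continuity_pt (fun lam => Sf lam x) 0.
Proof.
  intros Hx. unfold continuity_pt, continue_in, limit1_in, limit_in. intros eps Heps. simpl. unfold R_dist.
  assert (X2 : 0 < x^2) by nra. assert (X3 : 0 < x^3) by nra.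
  set (e2 := eps/(x^2+1)). assert (E2 : 0 < e2) by (apply Rdiv_lt_0_compat; lra).
  exists (Rmin (1/(4*x^2)) (Rmin (eps/(x^3+1)) (e2^2))). split.
  { apply Rmin_pos; [|apply Rmin_pos]; try apply Rdiv_lt_0_compat; try lra. nra. }
  intros lam [_ Hl]. rewrite Rminus_0_r in Hl. rewrite Sf_at0.
  assert (B1 : Rabs lam < 1/(4*x^2)) by (eapply Rlt_le_trans; [exact Hl| apply Rmin_l]).
  assert (B2 : Rabs lam < eps/(x^3+1)) by (eapply Rlt_le_trans; [exact Hl| eapply Rle_trans; [apply Rmin_r | apply Rmin_l]]).
  assert (B3 : Rabs lam < e2^2) by (eapply Rlt_le_trans; [exact Hl| eapply Rle_trans; [apply Rmin_r | apply Rmin_r]]).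
  assert (C1 : Rabs lam * x^2 < 1/4).
  { apply Rmult_lt_compat_r with (r := x^2) in B1; auto. replace (1/(4*x^2)*x^2) with (1/4) in B1 by (field; lra). lra. }
  assert (C2 : Rabs lam * x^3 < eps).
  { apply Rmult_lt_compat_r with (r := x^3) in B2; auto.
    assert (eps/(x^3+1)*x^3 < eps). { replace (eps/(x^3+1)*x^3) with (eps * (x^3/(x^3+1))) by (field; lra).
      assert (x^3/(x^3+1) < 1). { apply Rmult_lt_reg_r with (x^3+1). lra. field_simplify; lra. } nra. }
    lra. }
  unfold Sf. destruct (Rlt_dec 0 lam) as [h|h].
  - assert (k0 := sqrt_lt_R0 _ h). assert (kk := sqrt_sqrt lam (Rlt_le _ _ h)).
    rewrite Rabs_right in C1, C2 by lra.
    set (k := sqrt lam) in *. assert (Y : (k*x)^2 = lam * x^2) by (rewrite <- kk; ring).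
    destruct (sinb (k * x)) as [H1 H2]. split. nra. nra.
    replace (sin (k * x) / k - x) with ((sin (k*x) - k * x) / k) by (field; lra).
    rewrite Rabs_div by lra. rewrite (Rabs_right k) by lra.
    apply Rmult_lt_reg_r with k; auto. unfold Rdiv. rewrite Rmult_assoc, Rinv_l, Rmult_1_r by lra.
    rewrite Rabs_left1 by lra.
    assert (k * x ^ 3 * k * k < eps * k) by (rewrite <- kk in C2; nra). nra.
  - destruct (Rlt_dec lam 0) as [h'|h'].
    + assert (k0 : 0 < sqrt (-lam)) by (apply sqrt_lt_R0; lra).
      assert (kk := sqrt_sqrt (-lam) (ltac:(lra))).
      rewrite Rabs_left in C1, B3 by lra.
      set (k := sqrt (-lam)) in *. assert (Y : (k*x)^2 = - lam * x^2) by (rewrite <- kk; ring).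
      destruct (hypb (k * x)) as [_ H1]. split. nra. nra.
      replace ((exp (k * x) - exp (- (k * x))) / (2 * k) - x) with (((exp (k * x) - exp (- (k * x)))/2 - k * x) / k) by (field; lra).
      rewrite Rabs_div by lra. rewrite (Rabs_right k) by lra.
      apply Rmult_lt_reg_r with k; auto. unfold Rdiv. rewrite Rmult_assoc, Rinv_l, Rmult_1_r by lra.
      assert (k < e2) by nra.
      assert (k * x^2 < eps). { apply Rlt_le_trans with (e2 * x^2). nra. unfold e2.
        replace (eps / (x^2+1) * x^2) with (eps * (x^2/(x^2+1))) by (field; lra).
        assert (x^2/(x^2+1) <= 1). { apply Rmult_le_reg_r with (x^2+1). lra. field_simplify; lra. } nra. }
      nra.
    + assert (lam = 0) by lra. subst. rewrite Rminus_diag, Rabs_R0. auto.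
Qed.

Lemma der_cont' (F : R -> R) x : ex_derive F x -> continuity_pt F x.
Proof. intros H. apply continuity_pt_filterlim. apply (ex_derive_continuous F x). exact H. Qed.

Lemma Cf_cont x lam0 : 0 < x -> continuity_pt (fun lam => Cf lam x) lam0.
Proof.
  intros Hx. destruct (Rlt_dec 0 lam0) as [h|h].
  - apply (continuity_pt_locally_ext (fun lam => cos (sqrt lam * x)) _ lam0); auto.
    + intros y Hy. unfold Rdist in Hy. unfold Cf. destruct (Rlt_dec 0 y); auto.
      exfalso. apply Rabs_def2 in Hy. lra.
    + apply der_cont'. auto_derive. auto.
  - destruct (Rlt_dec lam0 0) as [h'|h'].
    + apply (continuity_pt_locally_ext (fun lam => (exp (sqrt (-lam) * x) + exp (- (sqrt (-lam) * x))) / 2) _ (-lam0)); [lra| |].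
      * intros y Hy. unfold Rdist in Hy. apply Rabs_def2 in Hy. unfold Cf. destruct (Rlt_dec 0 y); [lra|].
        destruct (Rlt_dec y 0); [auto|lra].
      * apply der_cont'. auto_derive. lra.
    + assert (lam0 = 0) by lra. subst. apply Cf_cont0; auto.
Qed.

Lemma Sf_cont x lam0 : 0 < x -> continuity_pt (fun lam => Sf lam x) lam0.
Proof.
  intros Hx. destruct (Rlt_dec 0 lam0) as [h|h].
  - apply (continuity_pt_locally_ext (fun lam => sin (sqrt lam * x) / sqrt lam) _ lam0); auto.
    + intros y Hy. unfold Rdist in Hy. unfold Sf. destruct (Rlt_dec 0 y); auto.
      exfalso. apply Rabs_def2 in Hy. lra.
    + apply der_cont'. auto_derive. assert (0 < sqrt lam0) by (apply sqrt_lt_R0; lra). repeat split; lra.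
  - destruct (Rlt_dec lam0 0) as [h'|h'].
    + apply (continuity_pt_locally_ext (fun lam => (exp (sqrt (-lam) * x) - exp (- (sqrt (-lam) * x))) / (2 * sqrt (-lam))) _ (-lam0)); [lra| |].
      * intros y Hy. unfold Rdist in Hy. apply Rabs_def2 in Hy. unfold Sf. destruct (Rlt_dec 0 y); [lra|].
        destruct (Rlt_dec y 0); [auto|lra].
      * apply der_cont'. auto_derive. assert (0 < sqrt (- lam0)) by (apply sqrt_lt_R0; lra). 
        repeat split; lra.
    + assert (lam0 = 0) by lra. subst. apply Sf_cont0; auto.
Qed.


Definition Rt lam l := Cf lam l / Sf lam l.
Definition Tt lam l := lam * Sf lam l / Cf lam l.

Lemma Rt_decr lam mu l : 0 < l -> lam < mu -> mu * l ^ 2 < PI ^ 2 -> Rt mu l < Rt lam l.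
Proof. intros Hl H1 H2. assert (W := WS lam mu l Hl H1 H2).
  assert (0 < Sf lam l) by (apply Sf_pos; nra). assert (0 < Sf mu l) by (apply Sf_pos; nra).
  unfold Rt. apply Rminus_lt. replace (Cf mu l / Sf mu l - Cf lam l / Sf lam l) with
   ((Sf lam l * Cf mu l - Cf lam l * Sf mu l) / (Sf lam l * Sf mu l)) by (field; lra).
  apply Rdiv_neg_pos; auto. nra. Qed.

Lemma Rt_at0 l : 0 < l -> Rt 0 l = 1 / l.
Proof. intros. unfold Rt. rewrite Cf_at0, Sf_at0. auto. Qed.

Lemma Rt_le lam l : 0 < l -> 0 <= lam -> lam * l ^ 2 < PI ^ 2 -> Rt lam l <= 1 / l.
Proof. intros Hl H0 H. rewrite <- Rt_at0 by auto. destruct (Req_dec lam 0). subst; lra.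
  apply Rlt_le, Rt_decr; auto; lra. Qed.

Lemma Rt_cont lam l : 0 < l -> lam * l ^ 2 < PI ^ 2 -> continuity_pt (fun mu => Rt mu l) lam.
Proof. intros Hl H. unfold Rt. apply continuity_pt_div; [apply Cf_cont | apply Sf_cont | ]; auto.
  apply Rgt_not_eq, Sf_pos; auto. Qed.

Lemma Rt_neg lam l : 0 < l -> lam < 0 -> sqrt (- lam) <= Rt lam l.
Proof. intros Hl H. unfold Rt, Cf, Sf. destruct (Rlt_dec 0 lam); [lra|]. destruct (Rlt_dec lam 0); [|lra].
  assert (k0 : 0 < sqrt (-lam)) by (apply sqrt_lt_R0; lra).
  set (k := sqrt (-lam)) in *. 
  assert (exp (- (k * l)) < exp (k * l)) by (apply exp_increasing; nra).
  assert (P := exp_pos (- (k * l))).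
  set (a := exp (k * l)) in *. set (b := exp (- (k * l))) in *.
  replace ((a + b) / 2 / ((a - b) / (2 * k))) with (k * ((a + b) / (a - b))) by (field; lra).
  assert (1 <= (a + b) / (a - b)). { apply Rmult_le_reg_r with (a - b). lra. field_simplify; lra. }
  nra. Qed.

Lemma sqrt_sq_pos a : 0 <= a -> sqrt (a ^ 2) = a.
Proof. apply sqrt_pow2. Qed.

Lemma Rt_pole l M : 0 < l -> exists lam, 0 <= lam /\ lam * l ^ 2 < PI ^ 2 /\ Rt lam l < M.
Proof.
  intros Hl. assert (PB := PI_bounds).
  set (d := Rmin (1/2) (1 / (l * (Rabs M + 1)))).
  assert (Hd0 : 0 < d) by (apply Rmin_pos; [lra| apply Rdiv_lt_0_compat; [lra| assert (0 <= Rabs M) by apply Rabs_pos; nra]]).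
  assert (Hd1 : d <= 1/2) by apply Rmin_l.
  assert (Hd2 : d <= 1 / (l * (Rabs M + 1))) by apply Rmin_r.
  set (k := (PI - d) / l). assert (Hk : 2 / l <= k). { unfold k. apply Rmult_le_compat_r. left; apply Rinv_0_lt_compat; auto. lra. }
  assert (Hk0 : 0 < k) by (assert (0 < 2/l) by (apply Rdiv_lt_0_compat; lra); lra).
  exists (k ^ 2). split; [nra|]. split.
  { replace (k ^ 2 * l ^ 2) with ((k * l) ^ 2) by ring. unfold k. replace ((PI - d) / l * l) with (PI - d) by (field; lra). nra. }
  unfold Rt, Cf, Sf. destruct (Rlt_dec 0 (k ^ 2)); [|nra]. rewrite sqrt_sq_pos by lra.
  assert (kl : k * l = PI - d) by (unfold k; field; lra). rewrite kl.
  rewrite Rtrigo_facts.cos_pi_minus, sin_PI_x.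
  destruct (cosb d) as [C1 _]; [lra|]. destruct (sinb d) as [S1 S2]; [lra|].
  assert (0 < sin d) by (apply sin_gt_0; lra).
  replace (- cos d / (sin d / k)) with (- (k * cos d / sin d)) by (field; lra).
  assert (k * cos d / sin d >= 1 / (l * d)).
  { assert (cd : 1/2 <= cos d) by nra.
    assert (A1 : / d <= / sin d) by (apply Rinv_le_contravar; lra).
    assert (A0 : 0 < 1 / l) by (apply Rdiv_lt_0_compat; lra).
    assert (A2 : 1 / l <= k * cos d) by (assert (2 / l = 2 * (1 / l)) by (field; lra); nra).
    replace (1 / (l * d)) with ((1 / l) * / d) by (field; lra). unfold Rdiv at 2.
    apply Rle_ge, Rmult_le_compat; auto; try lra. left; apply Rinv_0_lt_compat; lra. }
  assert (1 / (l * d) >= Rabs M + 1).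
  { assert (Hm : 0 < Rabs M + 1) by (assert (0 <= Rabs M) by apply Rabs_pos; lra).
    set (m := Rabs M + 1) in *.
    assert (E1 : l * d * m <= 1).
    { apply Rmult_le_compat_r with (r := l * m) in Hd2; [|nra].
      replace (1 / (l * m) * (l * m)) with 1 in Hd2 by (field; lra). nra. }
    apply Rle_ge. apply Rmult_le_reg_r with (l * d). nra.
    replace (1 / (l * d) * (l * d)) with 1 by (field; lra). nra. }
  assert (- M <= Rabs M) by (rewrite <- Rabs_Ropp; apply RRle_abs). lra.
Qed.

Lemma Tt_incr lam mu l : 0 < l -> lam < mu -> mu * l ^ 2 < (PI/2) ^ 2 -> Tt lam l < Tt mu l.
Proof. intros Hl H1 H2. assert (W := WC lam mu l Hl H1 H2).
  assert (0 < Cf lam l) by (apply Cf_pos; nra). assert (0 < Cf mu l) by (apply Cf_pos; nra).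
  unfold Tt. apply Rminus_gt. replace (mu * Sf mu l / Cf mu l - lam * Sf lam l / Cf lam l) with
   ((mu * Sf mu l * Cf lam l - lam * Sf lam l * Cf mu l) / (Cf lam l * Cf mu l)) by (field; lra).
  apply Rdiv_lt_0_compat; nra. Qed.

Lemma Tt_at0 l : Tt 0 l = 0.
Proof. unfold Tt. rewrite Cf_at0. field. Qed.

Lemma Tt_cont lam l : 0 < l -> lam * l ^ 2 < (PI/2) ^ 2 -> continuity_pt (fun mu => Tt mu l) lam.
Proof. intros Hl H. unfold Tt. apply continuity_pt_div.
  apply continuity_pt_mult. apply continuity_pt_id. apply Sf_cont; auto. apply Cf_cont; auto.
  apply Rgt_not_eq, Cf_pos; auto; lra. Qed.

Lemma Tt_pole l M : 0 < l -> exists lam, 0 <= lam /\ lam * l ^ 2 < (PI/2) ^ 2 /\ M < Tt lam l.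
Proof.
  intros Hl. assert (PB := PI_bounds). assert (P2 := PI2_3_2).
  assert (Hm : 0 < Rabs M + 1) by (assert (0 <= Rabs M) by apply Rabs_pos; lra).
  set (m := Rabs M + 1) in *.
  set (d := Rmin (1/2) (1 / (2 * l * m))).
  assert (Hd0 : 0 < d) by (apply Rmin_pos; [lra| apply Rdiv_lt_0_compat; nra]).
  assert (Hd1 : d <= 1/2) by apply Rmin_l.
  assert (Hd2 : d <= 1 / (2 * l * m)) by apply Rmin_r.
  set (k := (PI/2 - d) / l).
  assert (kl : k * l = PI/2 - d) by (unfold k; field; lra).
  assert (Hk : 1 <= k * l) by lra.
  assert (Hk0 : 0 < k) by nra.
  exists (k ^ 2). split; [nra|]. split.
  { replace (k ^ 2 * l ^ 2) with ((k * l) ^ 2) by ring. rewrite kl. nra. }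
  unfold Tt, Cf, Sf. destruct (Rlt_dec 0 (k ^ 2)); [|nra]. rewrite sqrt_sq_pos by lra.
  rewrite kl, sin_shift, cos_shift.
  destruct (cosb d) as [C1 _]; [lra|]. destruct (sinb d) as [S1 S2]; [lra|].
  assert (0 < sin d) by (apply sin_gt_0; lra).
  replace (k ^ 2 * (cos d / k) / sin d) with (k * cos d / sin d) by (field; lra).
  assert (k * cos d / sin d >= 1 / (2 * l * d)).
  { assert (cd : 1/2 <= cos d) by nra.
    assert (A1 : / d <= / sin d) by (apply Rinv_le_contravar; lra).
    assert (A0 : 0 < 1 / l) by (apply Rdiv_lt_0_compat; lra).
    assert (A3 : 1 / l <= k) by (apply Rmult_le_reg_r with l; [lra|]; replace (1 / l * l) with 1 by (field; lra); lra).
    assert (A2 : 1 / (2 * l) <= k * cos d) by (assert (1 / (2 * l) = (1 / l) / 2) by (field; lra); nra).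
    replace (1 / (2 * l * d)) with ((1 / (2 * l)) * / d) by (field; lra). unfold Rdiv at 2.
    apply Rle_ge, Rmult_le_compat; auto; try lra. left; apply Rdiv_lt_0_compat; lra. left; apply Rinv_0_lt_compat; lra. }
  assert (1 / (2 * l * d) >= m).
  { assert (E1 : 2 * l * d * m <= 1).
    { apply Rmult_le_compat_r with (r := 2 * l * m) in Hd2; [|nra].
      replace (1 / (2 * l * m) * (2 * l * m)) with 1 in Hd2 by (field; lra). nra. }
    apply Rle_ge. apply Rmult_le_reg_r with (2 * l * d). nra.
    replace (1 / (2 * l * d) * (2 * l * d)) with 1 by (field; lra). nra. }
  assert (M <= Rabs M) by apply RRle_abs. unfold m in *. lra.
Qed.


Section Star.
Variables l1 l2 l3 l4 : R.
Hypotheses (H1 : 0 < l1) (H2 : 0 < l2) (H3 : 0 < l3) (H4 : 0 < l4).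

Definition hh lam := Rt lam l1 + Rt lam l2 + Rt lam l3 + Rt lam l4.
Definition good lam := lam*l1^2 < PI^2 /\ lam*l2^2 < PI^2 /\ lam*l3^2 < PI^2 /\ lam*l4^2 < PI^2.

Lemma good_down lam mu : lam <= mu -> good mu -> good lam.
Proof. intros H [A1 [A2 [A3 A4]]]. unfold good.
  assert (0 < l1^2) by nra. assert (0 < l2^2) by nra. assert (0 < l3^2) by nra. assert (0 < l4^2) by nra.
  repeat split; nra. Qed.

Lemma hh_decr lam mu : lam < mu -> good mu -> hh mu < hh lam.
Proof. intros H [A1 [A2 [A3 A4]]]. unfold hh.
  assert (Rt mu l1 < Rt lam l1) by (apply Rt_decr; auto).
  assert (Rt mu l2 < Rt lam l2) by (apply Rt_decr; auto).
  assert (Rt mu l3 < Rt lam l3) by (apply Rt_decr; auto).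
  assert (Rt mu l4 < Rt lam l4) by (apply Rt_decr; auto). lra. Qed.

Lemma hh_inj lam mu : good lam -> good mu -> hh lam = hh mu -> lam = mu.
Proof. intros G1 G2 E. destruct (Rtotal_order lam mu) as [h|[h|h]]; auto.
  apply hh_decr in h; auto; lra. apply hh_decr in h; auto; lra. Qed.

Lemma hh_cont lam : good lam -> continuity_pt hh lam.
Proof. intros [A1 [A2 [A3 A4]]]. unfold hh.
  repeat apply continuity_pt_plus; apply Rt_cont; auto. Qed.

Lemma not_good_gt lam mu : good lam -> ~ good mu -> lam < mu.
Proof. intros G NG. destruct (Rlt_dec lam mu) as [h|h]; auto. exfalso. apply NG.
  apply (good_down mu lam); auto; lra. Qed.

Lemma hh_at0 : hh 0 = 1/l1 + 1/l2 + 1/l3 + 1/l4.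
Proof. unfold hh. rewrite !Rt_at0; auto. Qed.

Lemma hh_le lam : 0 <= lam -> good lam -> hh lam <= 1/l1 + 1/l2 + 1/l3 + 1/l4.
Proof. intros H [A1 [A2 [A3 A4]]]. unfold hh.
  assert (Rt lam l1 <= 1/l1) by (apply Rt_le; auto).
  assert (Rt lam l2 <= 1/l2) by (apply Rt_le; auto).
  assert (Rt lam l3 <= 1/l3) by (apply Rt_le; auto).
  assert (Rt lam l4 <= 1/l4) by (apply Rt_le; auto). lra. Qed.

Lemma star_root y : exists lam, good lam /\ hh lam = y.
Proof.
  assert (I1 : 0 < 1/l1) by (apply Rdiv_lt_0_compat; lra).
  assert (I2 : 0 < 1/l2) by (apply Rdiv_lt_0_compat; lra).
  assert (I3 : 0 < 1/l3) by (apply Rdiv_lt_0_compat; lra).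
  assert (I4 : 0 < 1/l4) by (apply Rdiv_lt_0_compat; lra).
  set (S := 1/l1 + 1/l2 + 1/l3 + 1/l4).
  set (L := Rmax (Rmax l1 l2) (Rmax l3 l4)).
  assert (HL : l1 <= L /\ l2 <= L /\ l3 <= L /\ l4 <= L).
  { pose proof (Rmax_l l1 l2). pose proof (Rmax_r l1 l2). pose proof (Rmax_l l3 l4). pose proof (Rmax_r l3 l4).
    pose proof (Rmax_l (Rmax l1 l2) (Rmax l3 l4)). pose proof (Rmax_r (Rmax l1 l2) (Rmax l3 l4)).
    unfold L. lra. }
  assert (HL' : L = l1 \/ L = l2 \/ L = l3 \/ L = l4).
  { unfold L, Rmax. repeat destruct Rle_dec; tauto. }
  assert (HL0 : 0 < L) by lra.
  destruct (Rt_pole L (y - S) HL0) as [b [Hb0 [Hb1 Hb2]]].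
  assert (Gb : good b).
  { destruct HL as [a1 [a2 [a3 a4]]]. unfold good. repeat split; apply (small_sq _ _ L); auto; lra. }
  assert (Hhb : hh b < y).
  { assert (hh b <= Rt b L + S).
    { destruct Gb as [A1 [A2 [A3 A4]]]. unfold hh, S.
      assert (Rt b l1 <= 1/l1) by (apply Rt_le; auto).
      assert (Rt b l2 <= 1/l2) by (apply Rt_le; auto).
      assert (Rt b l3 <= 1/l3) by (apply Rt_le; auto).
      assert (Rt b l4 <= 1/l4) by (apply Rt_le; auto).
      destruct HL' as [e|[e|[e|e]]]; rewrite e; lra. }
    lra. }
  set (c := Rabs y + 1). assert (Hc : 0 < c) by (assert (0 <= Rabs y) by apply Rabs_pos; unfold c; lra).
  set (a := - c ^ 2).
  assert (Ha0 : a < 0) by (unfold a; nra).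
  assert (Ga : good a) by (unfold good; assert (PB := PI_bounds); repeat split; nra).
  assert (Hha : y < hh a).
  { assert (sa : sqrt (- a) = c) by (unfold a; rewrite Ropp_involutive; apply sqrt_pow2; lra).
    unfold hh. assert (B1 := Rt_neg a l1 H1 Ha0). assert (B2 := Rt_neg a l2 H2 Ha0).
    assert (B3 := Rt_neg a l3 H3 Ha0). assert (B4 := Rt_neg a l4 H4 Ha0). rewrite sa in *.
    assert (y <= Rabs y) by apply RRle_abs. unfold c in *. assert (0 <= Rabs y) by apply Rabs_pos. lra. }
  destruct (Ranalysis5.IVT_interv (fun lam => y - hh lam) a b) as [z [Hz Ez]].
  - intros x Hx. apply continuity_pt_minus. apply continuity_pt_const. intros ? ?; auto.
    apply hh_cont. apply (good_down x b); auto; lra.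
  - lra.
  - lra.
  - lra.
  - exists z. split. apply (good_down z b); auto; lra. lra.
Qed.
End Star.

Lemma good_dec_hlp l1 l2 l3 l4 lam : good l1 l2 l3 l4 lam \/ ~ good l1 l2 l3 l4 lam.
Proof. apply Classical_Prop.classic. Qed.


Lemma edgeD l lam f df ddf : 0 < l -> edge_eq l lam f df ddf -> f l = 0 ->
  (forall x, 0 <= x <= l -> f x = df l * Sf lam (x - l)) /\ f 0 = - df l * Sf lam l /\ df 0 = df l * Cf lam l.
Proof. intros Hl He H0. split; [|split].
  - intros x Hx. destruct (repr l lam f df ddf l x He) as [E _]; try lra. rewrite E, H0. ring.
  - destruct (repr l lam f df ddf l 0 He) as [E _]; try lra. rewrite E, H0.
    replace (0 - l) with (- l) by ring. rewrite Sf_odd. ring.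
  - destruct (repr l lam f df ddf l 0 He) as [_ E]; try lra. rewrite E, H0.
    replace (0 - l) with (- l) by ring. rewrite Cf_even. ring.
Qed.

Lemma edgeD0 l lam f df ddf : 0 < l -> edge_eq l lam f df ddf -> f 0 = 0 ->
  (forall x, 0 <= x <= l -> f x = df 0 * Sf lam x) /\ f l = df 0 * Sf lam l /\ df l = df 0 * Cf lam l.
Proof. intros Hl He H0. split; [|split].
  - intros x Hx. destruct (repr l lam f df ddf 0 x He) as [E _]; try lra. rewrite E, H0, Rminus_0_r. ring.
  - destruct (repr l lam f df ddf 0 l He) as [E _]; try lra. rewrite E, H0, Rminus_0_r. ring.
  - destruct (repr l lam f df ddf 0 l He) as [_ E]; try lra. rewrite E, H0, Rminus_0_r. ring.
Qed.

Lemma edgeN0 l lam f df ddf : 0 < l -> edge_eq l lam f df ddf -> df 0 = 0 ->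
  (forall x, 0 <= x <= l -> f x = f 0 * Cf lam x) /\ f l = f 0 * Cf lam l /\ df l = - lam * f 0 * Sf lam l.
Proof. intros Hl He H0. split; [|split].
  - intros x Hx. destruct (repr l lam f df ddf 0 x He) as [E _]; try lra. rewrite E, H0, Rminus_0_r. ring.
  - destruct (repr l lam f df ddf 0 l He) as [E _]; try lra. rewrite E, H0, Rminus_0_r. ring.
  - destruct (repr l lam f df ddf 0 l He) as [_ E]; try lra. rewrite E, H0, Rminus_0_r. ring.
Qed.

Lemma F1 (P : R -> Prop) a : List.Forall P (a :: nil) -> P a.
Proof. intros H. inversion H; auto. Qed.
Lemma F4 (P : R -> Prop) a b c d : List.Forall P (a :: b :: c :: d :: nil) -> P a /\ P b /\ P c /\ P d.
Proof. intros H. inversion H as [|? ? Ha H']; subst. inversion H' as [|? ? Hb H'']; subst.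
  inversion H'' as [|? ? Hc H''']; subst. inversion H''' as [|? ? Hd _]; subst. auto. Qed.
Lemma F5 (P : R -> Prop) a b c d e : List.Forall P (a :: b :: c :: d :: e :: nil) -> P a /\ P b /\ P c /\ P d /\ P e.
Proof. intros H. inversion H as [|? ? Ha H']; subst. apply F4 in H'. tauto. Qed.

Lemma solve_d a S v : 0 < S -> v = - a * S -> a = - v / S.
Proof. intros; subst; field; lra. Qed.

Lemma F4_intro (P : R -> Prop) a b c d : P a -> P b -> P c -> P d -> List.Forall P (a :: b :: c :: d :: nil).
Proof. intros; repeat constructor; auto. Qed.
Lemma F5_intro (P : R -> Prop) a b c d e : P a -> P b -> P c -> P d -> P e -> List.Forall P (a :: b :: c :: d :: e :: nil).
Proof. intros; repeat constructor; auto. Qed.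

Lemma edge_S l lam c p : edge_eq l lam (fun x => c * Sf lam (x - p)) (fun x => c * Cf lam (x - p))
  (fun x => c * (- lam * Sf lam (x - p))).
Proof. split; [|split].
  - intros x. apply (D_eq _ _ (0 * Sf lam (x - p) + c * Cf lam (x - p))); [|ring].
    apply (D_mult (fun _ => c) (fun x => Sf lam (x - p))). auto_derive; auto. apply Ss_der.
  - intros x. apply (D_eq _ _ (0 * Cf lam (x - p) + c * (- lam * Sf lam (x - p)))); [|ring].
    apply (D_mult (fun _ => c) (fun x => Cf lam (x - p))). auto_derive; auto. apply Cs_der.
  - intros; ring.
Qed.
Lemma edge_C l lam c : edge_eq l lam (fun x => c * Cf lam (x - 0)) (fun x => c * (- lam * Sf lam (x - 0)))
  (fun x => c * (- lam * Cf lam (x - 0))).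
Proof. split; [|split].
  - intros x. apply (D_eq _ _ (0 * Cf lam (x - 0) + c * (- lam * Sf lam (x - 0)))); [|ring].
    apply (D_mult (fun _ => c) (fun x => Cf lam (x - 0))). auto_derive; auto. apply Cs_der.
  - intros x. apply (D_eq _ _ (0 * (- lam * Sf lam (x - 0)) + c * (- lam * Cf lam (x - 0)))); [|ring].
    apply (D_mult (fun _ => c) (fun x => - lam * Sf lam (x - 0))). auto_derive; auto.
    apply (D_eq _ _ (0 * Sf lam (x - 0) + (- lam) * Cf lam (x - 0))); [|ring].
    apply (D_mult (fun _ => - lam) (fun x => Sf lam (x - 0))). auto_derive; auto. apply Ss_der.
  - intros; ring.
Qed.

Section G1.
Variables l1 l2 l3 l4 : R.
Hypotheses (H1 : 0 < l1) (H2 : 0 < l2) (H3 : 0 < l3) (H4 : 0 < l4).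

Lemma eig1B_char g lam : eig1 (VDelta g) VDir l1 l2 l3 l4 lam -> good l1 l2 l3 l4 lam -> hh l1 l2 l3 l4 lam = - g.
Proof.
  intros [f [df [ddf [He [HA [HB Hnz]]]]]] G.
  assert (E1 := He 1%nat ltac:(lia)). assert (E2 := He 2%nat ltac:(lia)).
  assert (E3 := He 3%nat ltac:(lia)). assert (E4 := He 4%nat ltac:(lia)). simpl in E1, E2, E3, E4.
  simpl in HB. apply F4 in HB. destruct HB as [B1 [B2 [B3 B4]]].
  destruct (edgeD _ _ _ _ _ H1 E1 B1) as [R1 [P1 Q1]].
  destruct (edgeD _ _ _ _ _ H2 E2 B2) as [R2 [P2 Q2]].
  destruct (edgeD _ _ _ _ _ H3 E3 B3) as [R3 [P3 Q3]].
  destruct (edgeD _ _ _ _ _ H4 E4 B4) as [R4 [P4 Q4]].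
  destruct G as [G1 [G2 [G3 G4]]].
  assert (S1 := Sf_pos lam l1 H1 G1). assert (S2 := Sf_pos lam l2 H2 G2).
  assert (S3 := Sf_pos lam l3 H3 G3). assert (S4 := Sf_pos lam l4 H4 G4).
  simpl in HA. destruct HA as [v [HF Hs]]. apply F4 in HF. destruct HF as [A1 [A2 [A3 A4]]]. cbv beta in A1, A2, A3, A4.
  destruct (Req_dec v 0) as [v0|v0].
  - exfalso. subst v.
    assert (d1 : df 1%nat l1 = 0) by (apply (Rmult_eq_reg_r (Sf lam l1)); nra).
    assert (d2 : df 2%nat l2 = 0) by (apply (Rmult_eq_reg_r (Sf lam l2)); nra).
    assert (d3 : df 3%nat l3 = 0) by (apply (Rmult_eq_reg_r (Sf lam l3)); nra).
    assert (d4 : df 4%nat l4 = 0) by (apply (Rmult_eq_reg_r (Sf lam l4)); nra).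
    destruct Hnz as [i [x [Hi [Hx Hf]]]].
    destruct i as [|[|[|[|[|i]]]]]; try lia; simpl in Hx, Hf; apply Hf.
    rewrite R1, d1 by auto; ring. rewrite R2, d2 by auto; ring. rewrite R3, d3 by auto; ring. rewrite R4, d4 by auto; ring.
  - assert (e1 : df 1%nat l1 = - v / Sf lam l1) by (apply solve_d; lra).
    assert (e2 : df 2%nat l2 = - v / Sf lam l2) by (apply solve_d; lra).
    assert (e3 : df 3%nat l3 = - v / Sf lam l3) by (apply solve_d; lra).
    assert (e4 : df 4%nat l4 = - v / Sf lam l4) by (apply solve_d; lra).
    rewrite Q1, Q2, Q3, Q4, e1, e2, e3, e4 in Hs.
    apply (Rmult_eq_reg_r (- v)); [|lra]. replace (-g * -v) with (g * v) by ring. rewrite <- Hs. unfold hh, Rt. field. repeat split; lra.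
Qed.

Lemma eig1A_char g lam : eig1 VDir (VDelta g) l1 l2 l3 l4 lam -> good l1 l2 l3 l4 lam -> hh l1 l2 l3 l4 lam = - g.
Proof.
  intros [f [df [ddf [He [HA [HB Hnz]]]]]] G.
  assert (E1 := He 1%nat ltac:(lia)). assert (E2 := He 2%nat ltac:(lia)).
  assert (E3 := He 3%nat ltac:(lia)). assert (E4 := He 4%nat ltac:(lia)). simpl in E1, E2, E3, E4.
  simpl in HA. apply F4 in HA. destruct HA as [B1 [B2 [B3 B4]]].
  destruct (edgeD0 _ _ _ _ _ H1 E1 B1) as [R1 [P1 Q1]].
  destruct (edgeD0 _ _ _ _ _ H2 E2 B2) as [R2 [P2 Q2]].
  destruct (edgeD0 _ _ _ _ _ H3 E3 B3) as [R3 [P3 Q3]].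
  destruct (edgeD0 _ _ _ _ _ H4 E4 B4) as [R4 [P4 Q4]].
  destruct G as [G1 [G2 [G3 G4]]].
  assert (S1 := Sf_pos lam l1 H1 G1). assert (S2 := Sf_pos lam l2 H2 G2).
  assert (S3 := Sf_pos lam l3 H3 G3). assert (S4 := Sf_pos lam l4 H4 G4).
  simpl in HB. destruct HB as [v [HF Hs]]. apply F4 in HF. destruct HF as [A1 [A2 [A3 A4]]]. cbv beta in A1, A2, A3, A4.
  destruct (Req_dec v 0) as [v0|v0].
  - exfalso. subst v.
    assert (d1 : df 1%nat 0 = 0) by (apply (Rmult_eq_reg_r (Sf lam l1)); nra).
    assert (d2 : df 2%nat 0 = 0) by (apply (Rmult_eq_reg_r (Sf lam l2)); nra).
    assert (d3 : df 3%nat 0 = 0) by (apply (Rmult_eq_reg_r (Sf lam l3)); nra).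
    assert (d4 : df 4%nat 0 = 0) by (apply (Rmult_eq_reg_r (Sf lam l4)); nra).
    destruct Hnz as [i [x [Hi [Hx Hf]]]].
    destruct i as [|[|[|[|[|i]]]]]; try lia; simpl in Hx, Hf; apply Hf.
    rewrite R1, d1 by auto; ring. rewrite R2, d2 by auto; ring. rewrite R3, d3 by auto; ring. rewrite R4, d4 by auto; ring.
  - assert (e1 : df 1%nat 0 = v / Sf lam l1) by (rewrite P1 in A1; rewrite <- A1; field; lra).
    assert (e2 : df 2%nat 0 = v / Sf lam l2) by (rewrite P2 in A2; rewrite <- A2; field; lra).
    assert (e3 : df 3%nat 0 = v / Sf lam l3) by (rewrite P3 in A3; rewrite <- A3; field; lra).
    assert (e4 : df 4%nat 0 = v / Sf lam l4) by (rewrite P4 in A4; rewrite <- A4; field; lra).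
    rewrite Q1, Q2, Q3, Q4, e1, e2, e3, e4 in Hs.
    apply (Rmult_eq_reg_r (- v)); [|lra]. replace (-g * -v) with (g * v) by ring. rewrite <- Hs. unfold hh, Rt. field. repeat split; lra.
Qed.

Lemma eig1B_build g lam : good l1 l2 l3 l4 lam -> hh l1 l2 l3 l4 lam = - g -> eig1 (VDelta g) VDir l1 l2 l3 l4 lam.
Proof.
  intros G Hh. destruct G as [G1 [G2 [G3 G4]]].
  assert (S1 := Sf_pos lam l1 H1 G1). assert (S2 := Sf_pos lam l2 H2 G2).
  assert (S3 := Sf_pos lam l3 H3 G3). assert (S4 := Sf_pos lam l4 H4 G4).
  set (L := fun i : nat => match i with 1%nat => l1 | 2%nat => l2 | 3%nat => l3 | _ => l4 end).
  unfold eig1. cbv zeta.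
  exists (fun i x => (- / Sf lam (L i)) * Sf lam (x - L i)),
         (fun i x => (- / Sf lam (L i)) * Cf lam (x - L i)),
         (fun i x => (- / Sf lam (L i)) * (- lam * Sf lam (x - L i))).
  split; [|split; [|split]].
  - intros i Hi. apply edge_S.
  - simpl. exists 1. split.
    + apply F4_intro; unfold L; rewrite Rminus_0_l, Sf_odd; field; lra.
    + unfold L. rewrite !Rminus_0_l, !Cf_even. unfold hh, Rt in Hh.
      transitivity (- (Cf lam l1 / Sf lam l1 + Cf lam l2 / Sf lam l2 + Cf lam l3 / Sf lam l3 + Cf lam l4 / Sf lam l4)).
      field; repeat split; lra. rewrite Hh. ring.
  - simpl. apply F4_intro; unfold L; rewrite Rminus_diag, Sf0; ring.
  - exists 1%nat, 0. split; [lia|]. split; [simpl; lra|]. unfold L. rewrite Rminus_0_l, Sf_odd.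
    replace (- / Sf lam l1 * - Sf lam l1) with 1 by (field; lra). lra.
Qed.

Lemma eig1A_build g lam : good l1 l2 l3 l4 lam -> hh l1 l2 l3 l4 lam = - g -> eig1 VDir (VDelta g) l1 l2 l3 l4 lam.
Proof.
  intros G Hh. destruct G as [G1 [G2 [G3 G4]]].
  assert (S1 := Sf_pos lam l1 H1 G1). assert (S2 := Sf_pos lam l2 H2 G2).
  assert (S3 := Sf_pos lam l3 H3 G3). assert (S4 := Sf_pos lam l4 H4 G4).
  set (L := fun i : nat => match i with 1%nat => l1 | 2%nat => l2 | 3%nat => l3 | _ => l4 end).
  unfold eig1. cbv zeta.
  exists (fun i x => (/ Sf lam (L i)) * Sf lam (x - 0)),
         (fun i x => (/ Sf lam (L i)) * Cf lam (x - 0)),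
         (fun i x => (/ Sf lam (L i)) * (- lam * Sf lam (x - 0))).
  split; [|split; [|split]].
  - intros i Hi. apply edge_S.
  - simpl. apply F4_intro; unfold L; rewrite Rminus_diag, Sf0; ring.
  - simpl. exists 1. split.
    + apply F4_intro; unfold L; rewrite Rminus_0_r; field; lra.
    + unfold L. rewrite !Rminus_0_r. unfold hh, Rt in Hh.
      transitivity (- (Cf lam l1 / Sf lam l1 + Cf lam l2 / Sf lam l2 + Cf lam l3 / Sf lam l3 + Cf lam l4 / Sf lam l4)).
      field; repeat split; lra. rewrite Hh. ring.
  - exists 1%nat, l1. split; [lia|]. split; [simpl; lra|]. unfold L. rewrite Rminus_0_r.
    replace (/ Sf lam l1 * Sf lam l1) with 1 by (field; lra). lra.
Qed.
End G1.


Lemma Cf_mu0 l0 : 0 < l0 -> Cf ((PI / (2 * l0)) ^ 2) l0 = 0.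
Proof. intros Hl. assert (PB := PI_bounds). assert (0 < PI / (2 * l0)) by (apply Rdiv_lt_0_compat; lra).
  unfold Cf. destruct (Rlt_dec 0 ((PI / (2 * l0)) ^ 2)); [|nra].
  rewrite sqrt_pow2 by lra. replace (PI / (2 * l0) * l0) with (PI / 2) by (field; lra). apply cos_PI2. Qed.

Section G2.
Variables l0 l1 l2 l3 l4 : R.
Hypotheses (H0 : 0 < l0) (H1 : 0 < l1) (H2 : 0 < l2) (H3 : 0 < l3) (H4 : 0 < l4).

Definition good2 lam := good l1 l2 l3 l4 lam /\ lam * l0 ^ 2 < (PI/2) ^ 2.
Definition GG lam := hh l1 l2 l3 l4 lam - Tt lam l0.

Lemma eig2B_char lam : eig2 (VDelta 0) VDir l0 l1 l2 l3 l4 lam -> good2 lam -> GG lam = 0.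
Proof.
  intros [f [df [ddf [He [HA [HB [HC Hnz]]]]]]] [G G0].
  assert (E0 := He 0%nat ltac:(lia)).
  assert (E1 := He 1%nat ltac:(lia)). assert (E2 := He 2%nat ltac:(lia)).
  assert (E3 := He 3%nat ltac:(lia)). assert (E4 := He 4%nat ltac:(lia)). simpl in E0, E1, E2, E3, E4.
  simpl in HC. destruct HC as [w [_ Hw]]. rewrite Rmult_0_l in Hw.
  destruct (edgeN0 _ _ _ _ _ H0 E0 Hw) as [R0 [P0 Q0]].
  simpl in HB. apply F4 in HB. destruct HB as [B1 [B2 [B3 B4]]].
  destruct (edgeD _ _ _ _ _ H1 E1 B1) as [R1 [P1 Q1]].
  destruct (edgeD _ _ _ _ _ H2 E2 B2) as [R2 [P2 Q2]].
  destruct (edgeD _ _ _ _ _ H3 E3 B3) as [R3 [P3 Q3]].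
  destruct (edgeD _ _ _ _ _ H4 E4 B4) as [R4 [P4 Q4]].
  destruct G as [G1 [G2 [G3 G4]]].
  assert (S1 := Sf_pos lam l1 H1 G1). assert (S2 := Sf_pos lam l2 H2 G2).
  assert (S3 := Sf_pos lam l3 H3 G3). assert (S4 := Sf_pos lam l4 H4 G4).
  assert (C0 := Cf_pos lam l0 (Rlt_le _ _ H0) G0).
  simpl in HA. destruct HA as [v [HF Hs]]. apply F5 in HF. destruct HF as [A0 [A1 [A2 [A3 A4]]]].
  cbv beta in A0, A1, A2, A3, A4.
  destruct (Req_dec v 0) as [v0|v0].
  - exfalso. subst v.
    assert (d0 : f 0%nat 0 = 0) by (apply (Rmult_eq_reg_r (Cf lam l0)); nra).
    assert (d1 : df 1%nat l1 = 0) by (apply (Rmult_eq_reg_r (Sf lam l1)); nra).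
    assert (d2 : df 2%nat l2 = 0) by (apply (Rmult_eq_reg_r (Sf lam l2)); nra).
    assert (d3 : df 3%nat l3 = 0) by (apply (Rmult_eq_reg_r (Sf lam l3)); nra).
    assert (d4 : df 4%nat l4 = 0) by (apply (Rmult_eq_reg_r (Sf lam l4)); nra).
    destruct Hnz as [i [x [Hi [Hx Hf]]]].
    destruct i as [|[|[|[|[|i]]]]]; try lia; simpl in Hx, Hf; apply Hf.
    rewrite R0, d0 by auto; ring.
    rewrite R1, d1 by auto; ring. rewrite R2, d2 by auto; ring. rewrite R3, d3 by auto; ring. rewrite R4, d4 by auto; ring.
  - assert (e0 : f 0%nat 0 = v / Cf lam l0) by (rewrite P0 in A0; rewrite <- A0; field; lra).
    assert (e1 : df 1%nat l1 = - v / Sf lam l1) by (apply solve_d; lra).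
    assert (e2 : df 2%nat l2 = - v / Sf lam l2) by (apply solve_d; lra).
    assert (e3 : df 3%nat l3 = - v / Sf lam l3) by (apply solve_d; lra).
    assert (e4 : df 4%nat l4 = - v / Sf lam l4) by (apply solve_d; lra).
    rewrite Q0, Q1, Q2, Q3, Q4, e0, e1, e2, e3, e4, Rmult_0_l in Hs.
    apply (Rmult_eq_reg_r (- v)); [|lra]. rewrite Rmult_0_l. rewrite <- Hs. unfold GG, hh, Rt, Tt. field. repeat split; lra.
Qed.

Lemma eig2A_char lam : eig2 VDir (VDelta 0) l0 l1 l2 l3 l4 lam -> good2 lam -> hh l1 l2 l3 l4 lam = 0.
Proof.
  intros [f [df [ddf [He [HA [HB [HC Hnz]]]]]]] [G G0].
  assert (E0 := He 0%nat ltac:(lia)).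
  assert (E1 := He 1%nat ltac:(lia)). assert (E2 := He 2%nat ltac:(lia)).
  assert (E3 := He 3%nat ltac:(lia)). assert (E4 := He 4%nat ltac:(lia)). simpl in E0, E1, E2, E3, E4.
  simpl in HC. destruct HC as [w [_ Hw]]. rewrite Rmult_0_l in Hw.
  destruct (edgeN0 _ _ _ _ _ H0 E0 Hw) as [R0 [P0 Q0]].
  simpl in HA. apply F5 in HA. destruct HA as [B0 [B1 [B2 [B3 B4]]]].
  destruct (edgeD0 _ _ _ _ _ H1 E1 B1) as [R1 [P1 Q1]].
  destruct (edgeD0 _ _ _ _ _ H2 E2 B2) as [R2 [P2 Q2]].
  destruct (edgeD0 _ _ _ _ _ H3 E3 B3) as [R3 [P3 Q3]].
  destruct (edgeD0 _ _ _ _ _ H4 E4 B4) as [R4 [P4 Q4]].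
  destruct G as [G1 [G2 [G3 G4]]].
  assert (S1 := Sf_pos lam l1 H1 G1). assert (S2 := Sf_pos lam l2 H2 G2).
  assert (S3 := Sf_pos lam l3 H3 G3). assert (S4 := Sf_pos lam l4 H4 G4).
  assert (C0 := Cf_pos lam l0 (Rlt_le _ _ H0) G0).
  cbv beta in B0. 
  assert (d0 : f 0%nat 0 = 0) by (apply (Rmult_eq_reg_r (Cf lam l0)); nra).
  simpl in HB. destruct HB as [v [HF Hs]]. apply F4 in HF. destruct HF as [A1 [A2 [A3 A4]]]. cbv beta in A1, A2, A3, A4.
  destruct (Req_dec v 0) as [v0|v0].
  - exfalso. subst v.
    assert (d1 : df 1%nat 0 = 0) by (apply (Rmult_eq_reg_r (Sf lam l1)); nra).
    assert (d2 : df 2%nat 0 = 0) by (apply (Rmult_eq_reg_r (Sf lam l2)); nra).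
    assert (d3 : df 3%nat 0 = 0) by (apply (Rmult_eq_reg_r (Sf lam l3)); nra).
    assert (d4 : df 4%nat 0 = 0) by (apply (Rmult_eq_reg_r (Sf lam l4)); nra).
    destruct Hnz as [i [x [Hi [Hx Hf]]]].
    destruct i as [|[|[|[|[|i]]]]]; try lia; simpl in Hx, Hf; apply Hf.
    rewrite R0, d0 by auto; ring.
    rewrite R1, d1 by auto; ring. rewrite R2, d2 by auto; ring. rewrite R3, d3 by auto; ring. rewrite R4, d4 by auto; ring.
  - assert (e1 : df 1%nat 0 = v / Sf lam l1) by (rewrite P1 in A1; rewrite <- A1; field; lra).
    assert (e2 : df 2%nat 0 = v / Sf lam l2) by (rewrite P2 in A2; rewrite <- A2; field; lra).
    assert (e3 : df 3%nat 0 = v / Sf lam l3) by (rewrite P3 in A3; rewrite <- A3; field; lra).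
    assert (e4 : df 4%nat 0 = v / Sf lam l4) by (rewrite P4 in A4; rewrite <- A4; field; lra).
    rewrite Q1, Q2, Q3, Q4, e1, e2, e3, e4, Rmult_0_l in Hs.
    apply (Rmult_eq_reg_r (- v)); [|lra]. rewrite Rmult_0_l. rewrite <- Hs. unfold hh, Rt. field. repeat split; lra.
Qed.

Lemma eig2B_build lam : good2 lam -> GG lam = 0 -> eig2 (VDelta 0) VDir l0 l1 l2 l3 l4 lam.
Proof.
  intros [G G0] Hh. destruct G as [G1 [G2 [G3 G4]]].
  assert (S1 := Sf_pos lam l1 H1 G1). assert (S2 := Sf_pos lam l2 H2 G2).
  assert (S3 := Sf_pos lam l3 H3 G3). assert (S4 := Sf_pos lam l4 H4 G4).
  assert (C0 := Cf_pos lam l0 (Rlt_le _ _ H0) G0).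
  set (L := fun i : nat => match i with 0%nat => l0 | 1%nat => l1 | 2%nat => l2 | 3%nat => l3 | _ => l4 end).
  unfold eig2. cbv zeta.
  exists (fun i x => match i with 0%nat => (/ Cf lam l0) * Cf lam (x - 0) | _ => (- / Sf lam (L i)) * Sf lam (x - L i) end),
         (fun i x => match i with 0%nat => (/ Cf lam l0) * (- lam * Sf lam (x - 0)) | _ => (- / Sf lam (L i)) * Cf lam (x - L i) end),
         (fun i x => match i with 0%nat => (/ Cf lam l0) * (- lam * Cf lam (x - 0)) | _ => (- / Sf lam (L i)) * (- lam * Sf lam (x - L i)) end).
  split; [|split; [|split; [|split]]].
  - intros i Hi. destruct i as [|i]. apply edge_C. apply edge_S.
  - simpl. exists 1. split.
    + apply F5_intro; unfold L; rewrite ?Rminus_0_l, ?Rminus_0_r, ?Sf_odd; field; lra.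
    + unfold L. rewrite !Rminus_0_l, !Rminus_0_r, !Cf_even. unfold GG, hh, Rt, Tt in Hh.
      transitivity (- (Cf lam l1 / Sf lam l1 + Cf lam l2 / Sf lam l2 + Cf lam l3 / Sf lam l3 + Cf lam l4 / Sf lam l4 - lam * Sf lam l0 / Cf lam l0)).
      field; repeat split; lra. rewrite Hh. ring.
  - simpl. apply F4_intro; unfold L; rewrite Rminus_diag, Sf0; ring.
  - simpl. exists (/ Cf lam l0 * Cf lam (0 - 0)). split. repeat constructor. rewrite Rminus_diag, Sf0. ring.
  - exists 1%nat, 0. split; [lia|]. split; [simpl; lra|]. simpl. unfold L. rewrite Rminus_0_l, Sf_odd.
    replace (- / Sf lam l1 * - Sf lam l1) with 1 by (field; lra). lra.
Qed.

Lemma eig2A_build_mu0 : eig2 VDir (VDelta 0) l0 l1 l2 l3 l4 ((PI / (2 * l0)) ^ 2).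
Proof.
  set (lam := (PI / (2 * l0)) ^ 2).
  unfold eig2. cbv zeta.
  exists (fun i x => match i with 0%nat => 1 * Cf lam (x - 0) | _ => 0 * Sf lam (x - 0) end),
         (fun i x => match i with 0%nat => 1 * (- lam * Sf lam (x - 0)) | _ => 0 * Cf lam (x - 0) end),
         (fun i x => match i with 0%nat => 1 * (- lam * Cf lam (x - 0)) | _ => 0 * (- lam * Sf lam (x - 0)) end).
  split; [|split; [|split; [|split]]].
  - intros i Hi. destruct i as [|i]. apply edge_C. apply edge_S.
  - simpl. apply F5_intro; rewrite ?Rminus_0_r; try ring. unfold lam; rewrite Cf_mu0; auto; ring.
  - simpl. exists 0. split. apply F4_intro; ring. ring.
  - simpl. exists (1 * Cf lam (0 - 0)). split. repeat constructor. rewrite Rminus_diag, Sf0. ring.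
  - exists 0%nat, 0. split; [lia|]. split; [simpl; lra|]. simpl. rewrite Rminus_diag, Cf0. lra.
Qed.

Lemma eig2A_build_star lam : good l1 l2 l3 l4 lam -> hh l1 l2 l3 l4 lam = 0 -> eig2 VDir (VDelta 0) l0 l1 l2 l3 l4 lam.
Proof.
  intros G Hh. destruct G as [G1 [G2 [G3 G4]]].
  assert (S1 := Sf_pos lam l1 H1 G1). assert (S2 := Sf_pos lam l2 H2 G2).
  assert (S3 := Sf_pos lam l3 H3 G3). assert (S4 := Sf_pos lam l4 H4 G4).
  set (L := fun i : nat => match i with 0%nat => l0 | 1%nat => l1 | 2%nat => l2 | 3%nat => l3 | _ => l4 end).
  unfold eig2. cbv zeta.
  exists (fun i x => match i with 0%nat => 0 * Cf lam (x - 0) | _ => (/ Sf lam (L i)) * Sf lam (x - 0) end),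
         (fun i x => match i with 0%nat => 0 * (- lam * Sf lam (x - 0)) | _ => (/ Sf lam (L i)) * Cf lam (x - 0) end),
         (fun i x => match i with 0%nat => 0 * (- lam * Cf lam (x - 0)) | _ => (/ Sf lam (L i)) * (- lam * Sf lam (x - 0)) end).
  split; [|split; [|split; [|split]]].
  - intros i Hi. destruct i as [|i]. apply edge_C. apply edge_S.
  - simpl. apply F5_intro; rewrite ?Rminus_diag, ?Sf0; ring.
  - simpl. exists 1. split.
    + apply F4_intro; unfold L; rewrite Rminus_0_r; field; lra.
    + unfold L. rewrite !Rminus_0_r. unfold hh, Rt in Hh.
      transitivity (- (Cf lam l1 / Sf lam l1 + Cf lam l2 / Sf lam l2 + Cf lam l3 / Sf lam l3 + Cf lam l4 / Sf lam l4)).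
      field; repeat split; lra. rewrite Hh. ring.
  - simpl. exists (0 * Cf lam (0 - 0)). split. repeat constructor. ring.
  - exists 1%nat, l1. split; [lia|]. split; [simpl; lra|]. simpl. unfold L. rewrite Rminus_0_r.
    replace (/ Sf lam l1 * Sf lam l1) with 1 by (field; lra). lra.
Qed.
End G2.


Lemma lam1_uniq (E : R -> Prop) m : E m -> (forall mu, E mu -> m <= mu) ->
  is_lambda1 E m /\ (forall a, is_lambda1 E a -> a = m).
Proof. intros Em Hm. split. split; auto. intros a [Ea Ha]. apply Rle_antisym; auto. Qed.

Lemma lt_of (EB EA : R -> Prop) mb ma : EB mb -> (forall mu, EB mu -> mb <= mu) ->
  EA ma -> (forall mu, EA mu -> ma <= mu) -> mb < ma -> lambda1_lt EB EA.
Proof. intros Eb Hb Ea Ha Hlt.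
  destruct (lam1_uniq EB mb Eb Hb) as [Lb Ub]. destruct (lam1_uniq EA ma Ea Ha) as [La Ua].
  split; [exists ma; auto | split; [exists mb; auto|]].
  intros a b HA HB. rewrite (Ua a HA), (Ub b HB). auto. Qed.

Lemma part1 l1 l2 l3 l4 gA gB :
     0 < l1 -> 0 < l2 -> 0 < l3 -> 0 < l4 -> gA < gB ->
     lambda1_lt (eig1 (VDelta gA) VDir l1 l2 l3 l4)
                (eig1 VDir (VDelta gB) l1 l2 l3 l4).
Proof.
  intros H1 H2 H3 H4 Hg.
  destruct (star_root l1 l2 l3 l4 H1 H2 H3 H4 (- gA)) as [lb [Gb Hb]].
  destruct (star_root l1 l2 l3 l4 H1 H2 H3 H4 (- gB)) as [la [Ga Ha]].
  apply (lt_of _ _ lb la).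
  - apply eig1B_build; auto.
  - intros mu Emu. destruct (good_dec_hlp l1 l2 l3 l4 mu) as [Gm|Gm].
    + right. apply (hh_inj l1 l2 l3 l4 H1 H2 H3 H4); auto. rewrite Hb.
      symmetry. apply (eig1B_char l1 l2 l3 l4 H1 H2 H3 H4); auto.
    + left. apply (not_good_gt l1 l2 l3 l4 H1 H2 H3 H4); auto.
  - apply eig1A_build; auto.
  - intros mu Emu. destruct (good_dec_hlp l1 l2 l3 l4 mu) as [Gm|Gm].
    + right. apply (hh_inj l1 l2 l3 l4 H1 H2 H3 H4); auto. rewrite Ha.
      symmetry. apply (eig1A_char l1 l2 l3 l4 H1 H2 H3 H4); auto.
    + left. apply (not_good_gt l1 l2 l3 l4 H1 H2 H3 H4); auto.
  - destruct (Rtotal_order lb la) as [h|[h|h]]; auto.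
    + subst. lra.
    + apply (hh_decr l1 l2 l3 l4 H1 H2 H3 H4) in h; auto. lra.
Qed.

Lemma good2_down l0 l1 l2 l3 l4 lam mu : 0 < l0 -> 0 < l1 -> 0 < l2 -> 0 < l3 -> 0 < l4 ->
  lam <= mu -> good2 l0 l1 l2 l3 l4 mu -> good2 l0 l1 l2 l3 l4 lam.
Proof. intros H0 H1 H2 H3 H4 Hl [G G0]. split. apply (good_down l1 l2 l3 l4 H1 H2 H3 H4 lam mu); auto.
  assert (0 < l0^2) by nra. nra. Qed.

Lemma GG_decr l0 l1 l2 l3 l4 lam mu : 0 < l0 -> 0 < l1 -> 0 < l2 -> 0 < l3 -> 0 < l4 ->
  lam < mu -> good2 l0 l1 l2 l3 l4 mu -> GG l0 l1 l2 l3 l4 mu < GG l0 l1 l2 l3 l4 lam.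
Proof. intros H0 H1 H2 H3 H4 Hl [G G0]. unfold GG.
  assert (hh l1 l2 l3 l4 mu < hh l1 l2 l3 l4 lam) by (apply hh_decr; auto).
  assert (Tt lam l0 < Tt mu l0) by (apply Tt_incr; auto). lra. Qed.

Lemma part2 l0 l1 l2 l3 l4 :
     0 < l0 -> 0 < l1 -> 0 < l2 -> 0 < l3 -> 0 < l4 ->
     lambda1_lt (eig2 (VDelta 0) VDir l0 l1 l2 l3 l4)
                (eig2 VDir (VDelta 0) l0 l1 l2 l3 l4).
Proof.
  intros H0 H1 H2 H3 H4.
  assert (PB := PI_bounds).
  assert (L0 : 0 < l0 ^ 2) by nra.
  assert (I1 : 0 < 1/l1) by (apply Rdiv_lt_0_compat; lra).
  assert (I2 : 0 < 1/l2) by (apply Rdiv_lt_0_compat; lra).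
  assert (I3 : 0 < 1/l3) by (apply Rdiv_lt_0_compat; lra).
  assert (I4 : 0 < 1/l4) by (apply Rdiv_lt_0_compat; lra).
  assert (Good0 : good l1 l2 l3 l4 0) by (unfold good; repeat split; nra).
  assert (Good20 : good2 l0 l1 l2 l3 l4 0) by (split; auto; nra).
  assert (hh0 := hh_at0 l1 l2 l3 l4 H1 H2 H3 H4).
  destruct (star_root l1 l2 l3 l4 H1 H2 H3 H4 0) as [ms [Gs Hs]].
  assert (Hms : 0 < ms).
  { destruct (Rtotal_order ms 0) as [h|[h|h]]; auto.
    - apply (hh_decr l1 l2 l3 l4 H1 H2 H3 H4) in h; auto. lra.
    - subst. lra. }
  set (mu0 := (PI / (2 * l0)) ^ 2).
  assert (Emu0 : mu0 * l0 ^ 2 = (PI/2)^2) by (unfold mu0; field; lra).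
  assert (Tms : forall m, 0 < m -> m * l0 ^ 2 < (PI/2)^2 -> 0 < Tt m l0).
  { intros m Hm Hm2. rewrite <- (Tt_at0 l0). apply Tt_incr; auto. }
  assert (Hb : exists b, 0 <= b /\ good2 l0 l1 l2 l3 l4 b /\ GG l0 l1 l2 l3 l4 b < 0).
  { destruct (Rlt_dec (ms * l0 ^ 2) ((PI/2)^2)) as [h|h].
    - exists ms. split; [lra|]. split; [split; auto|]. unfold GG. rewrite Hs. assert (Tt ms l0 > 0) by (apply Tms; auto). lra.
    - destruct (Tt_pole l0 (1/l1 + 1/l2 + 1/l3 + 1/l4) H0) as [b [Hb0 [Hb1 Hb2]]].
      assert (b < ms) by nra.
      assert (Gb : good l1 l2 l3 l4 b) by (apply (good_down l1 l2 l3 l4 H1 H2 H3 H4 b ms); auto; lra).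
      exists b. split; auto. split; [split; auto|]. unfold GG.
      assert (hh l1 l2 l3 l4 b <= 1/l1 + 1/l2 + 1/l3 + 1/l4) by (apply hh_le; auto). lra. }
  destruct Hb as [b [Hb0 [Gb Hb]]].
  assert (GG0 : GG l0 l1 l2 l3 l4 0 = 1/l1 + 1/l2 + 1/l3 + 1/l4) by (unfold GG; rewrite hh0, Tt_at0; ring).
  assert (Hb0' : 0 < b) by (destruct (Req_dec b 0); [subst; lra | lra]).
  destruct (Ranalysis5.IVT_interv (fun lam => - GG l0 l1 l2 l3 l4 lam) 0 b) as [lB [HlB ElB]].
  - intros x Hx. apply continuity_pt_opp.
    assert (G2x : good2 l0 l1 l2 l3 l4 x) by (apply (good2_down l0 l1 l2 l3 l4 x b); auto; lra).
    destruct G2x as [Gx Gx0]. unfold GG. apply continuity_pt_minus.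
    apply hh_cont; auto. apply Tt_cont; auto.
  - lra.
  - lra.
  - lra.
  - assert (GB : good2 l0 l1 l2 l3 l4 lB) by (apply (good2_down l0 l1 l2 l3 l4 lB b); auto; lra).
    assert (GBz : GG l0 l1 l2 l3 l4 lB = 0) by lra.
    apply (lt_of _ _ lB (Rmin mu0 ms)).
    + apply eig2B_build; auto.
    + intros mu Emu. destruct (Rle_dec lB mu) as [h|h]; auto. exfalso.
      assert (G2m : good2 l0 l1 l2 l3 l4 mu) by (apply (good2_down l0 l1 l2 l3 l4 mu lB); auto; lra).
      assert (E := eig2B_char l0 l1 l2 l3 l4 H0 H1 H2 H3 H4 mu Emu G2m).
      assert (GG l0 l1 l2 l3 l4 lB < GG l0 l1 l2 l3 l4 mu) by (apply GG_decr; auto; lra). lra.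
    + apply Rmin_case. apply eig2A_build_mu0; auto. apply eig2A_build_star; auto.
    + intros mu Emu. destruct (Rle_dec (Rmin mu0 ms) mu) as [h|h]; auto. exfalso.
      assert (h1 : mu < mu0) by (assert (Rmin mu0 ms <= mu0) by apply Rmin_l; lra).
      assert (h2 : mu < ms) by (assert (Rmin mu0 ms <= ms) by apply Rmin_r; lra).
      assert (G2m : good2 l0 l1 l2 l3 l4 mu).
      { split. apply (good_down l1 l2 l3 l4 H1 H2 H3 H4 mu ms); auto; lra. nra. }
      assert (E := eig2A_char l0 l1 l2 l3 l4 H0 H1 H2 H3 H4 mu Emu G2m).
      assert (mu = ms) by (apply (hh_inj l1 l2 l3 l4 H1 H2 H3 H4); auto; destruct G2m; auto; lra). lra.
    + destruct GB as [GB1 GB2]. apply Rmin_glb_lt. nra.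
      destruct (Rlt_dec lB ms) as [h|h]; auto. exfalso.
      assert (G2s : good2 l0 l1 l2 l3 l4 ms) by (apply (good2_down l0 l1 l2 l3 l4 ms lB); auto; [lra | split; auto]).
      assert (GGs : GG l0 l1 l2 l3 l4 ms < 0).
      { unfold GG. rewrite Hs. destruct G2s. assert (0 < Tt ms l0) by (apply Tms; auto). lra. }
      destruct (Req_dec ms lB) as [e|e]. rewrite e in GGs; lra.
      assert (GG l0 l1 l2 l3 l4 lB < GG l0 l1 l2 l3 l4 ms) by (apply GG_decr; auto; [lra | split; auto]). lra.
Qed.

Theorem lemma4p1 :
  (forall l1 l2 l3 l4 gA gB : R,
     0 < l1 -> 0 < l2 -> 0 < l3 -> 0 < l4 -> gA < gB ->
     lambda1_lt (eig1 (VDelta gA) VDir l1 l2 l3 l4)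
                (eig1 VDir (VDelta gB) l1 l2 l3 l4)) /\
  (forall l0 l1 l2 l3 l4 : R,
     0 < l0 -> 0 < l1 -> 0 < l2 -> 0 < l3 -> 0 < l4 ->
     lambda1_lt (eig2 (VDelta 0) VDir l0 l1 l2 l3 l4)
                (eig2 VDir (VDelta 0) l0 l1 l2 l3 l4)).
Proof.
  split; [exact part1 | exact part2].
Qed.
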